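(* Let $\mathbb{K}$ be a field of characteristic $0$. For every $d\geq 4$ there is a positive integer $r_0$ such that for all $r\geq r_0$ there exists a standard graded Artinian Gorenstein $\mathbb{K}$-algebra of socle degree $d$ and codimension $r$ whose Hilbert function $(1,h_1,\ldots,h_d)$ is totally non-unimodal, i.e. $h_1>h_2>\cdots>h_{\lfloor d/2\rfloor}$. *)

(* Defs.v *)
From HB Require Import structures.
From mathcomp Require Import all_boot all_order all_algebra.
From mathcomp Require Import mpoly.

Set Implicit Arguments.
Unset Strict Implicit.
Unset Printing Implicit Defensive.

Import Order.TTheory GRing.Theory.
Local Open Scope ring_scope.

Section AG.
Variables (K : fieldType) (r : nat).
Implicit Types (I : {pred {mpoly K[r]}}) (p f g : {mpoly K[r]}).

Definition is_ideal I : Prop :=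
  [/\ 0 \in I,
      (forall p q, p \in I -> q \in I -> p + q \in I) &
      (forall p q, q \in I -> p * q \in I)].

Definition is_homogeneous I : Prop :=
  forall p (k : nat), p \in I -> pihomog mdeg k p \in I.

(* degree-k forms q_1..q_n are K-linearly independent modulo I,
   i.e. their classes in the degree-k component A_k of A = R/I are independent *)
Definition indep_mod I (k n : nat) (q : 'I_n -> {mpoly K[r]}) : Prop :=
  (forall j, q j \is k.-homog) /\
  (forall c : 'I_n -> K, \sum_(j < n) c j *: q j \in I -> forall j, c j = 0).

Definition hilb_fun_at I (k h : nat) : Prop :=
  (exists q : 'I_h -> {mpoly K[r]}, indep_mod I k q) /\
  ~ (exists q : 'I_h.+1 -> {mpoly K[r]}, indep_mod I k q).

Definition in_socle I f : Prop := forall i : 'I_r, f * 'X_i \in I.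

Definition socle_dim1 I : Prop :=
  exists f, [/\ in_socle I f, f \notin I &
    forall g, in_socle I g -> exists c : K, g - c *: f \in I].

(* A = R/I is a standard graded Artinian Gorenstein K-algebra of socle degree d:
   I a proper homogeneous ideal, A_d <> 0, A_(d+1) = 0 (so A_k = 0 for k > d,
   A is Artinian), and the socle of A is one-dimensional (Gorenstein). *)
Definition std_graded_AG I (d : nat) : Prop :=
  [/\ is_ideal I, is_homogeneous I & (1 : {mpoly K[r]}) \notin I] /\
  [/\ ~ hilb_fun_at I d 0, hilb_fun_at I d.+1 0 & socle_dim1 I].

End AG.

(* Main.v *)
Require Import Defs.
From HB Require Import structures.
From mathcomp Require Import all_boot all_order all_algebra.
From mathcomp Require Import mpoly zify.
From Stdlib Require Import ClassicalEpsilon Classical_Prop.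

Import Order.TTheory GRing.Theory.

Set Implicit Arguments.
Unset Strict Implicit.
Unset Printing Implicit Defensive.

Lemma bin_step s j : (2 * j < s)%N -> ('C(s, j) <= 'C(s, j.+1))%N.
Proof.
move=> h; rewrite -(@leq_pmul2l j.+1) // mul_bin_left leq_mul2r.
apply/orP; right; lia.
Qed.

Lemma bin_mono s a b : (a <= b)%N -> (2 * b <= s)%N -> ('C(s, a) <= 'C(s, b))%N.
Proof.
move=> hab hb; elim: b hab hb => [|b ih] hab hb.
  by move: hab; rewrite leqn0 => /eqP ->.
case: (eqVneq a b.+1) => [->//|ne].
have hab' : (a <= b)%N by lia.
apply: (leq_trans (ih hab' _)); first lia.
apply: bin_step; lia.
Qed.

Lemma bin_triple s e : (3 * e.+1 <= s - e)%N -> (e <= s)%N ->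
  (3 * 'C(s, e) <= 'C(s, e.+1))%N.
Proof.
move=> h he; rewrite -(@leq_pmul2l e.+1) // mul_bin_left mulnA leq_mul2r.
apply/orP; right; lia.
Qed.

Lemma count_ineq d k : (4 <= d)%N -> (1 <= k)%N -> (k < d./2)%N ->
  ('C(4 * d, k.+1) + 'C(4 * d, d - k.+1) < 'C(4 * d, d - k))%N.
Proof.
move=> hd hk1 hk2.
have h2 : (2 * k.+1 <= d)%N.
  have := odd_double_half d; move: hk2; move: (d./2) (odd d) => h b.
  rewrite -addnn; case: b => /=; lia.
set e := (d - k.+1)%N.
have -> : (d - k = e.+1)%N by rewrite /e; lia.
have hC0 : (0 < 'C(4 * d, e))%N by rewrite bin_gt0 /e; lia.
have hm : ('C(4 * d, k.+1) <= 'C(4 * d, e))%N by apply: bin_mono; rewrite /e; lia.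
have ht : (3 * 'C(4 * d, e) <= 'C(4 * d, e.+1))%N by apply: bin_triple; rewrite /e; lia.
lia.
Qed.

Local Open Scope ring_scope.

Section Generic.
Variables (K : fieldType) (r : nat) (d : nat).
Variables (SI : finType) (sv : SI -> 'X_{1..r}).
Hypothesis sv_inj : injective sv.
Hypothesis sv_deg : forall a, mdeg (sv a) = d.

Definition Lf (p : {mpoly K[r]}) : K := \sum_a p@_(sv a).

Lemma Lf0 : Lf 0 = 0.
Proof. by rewrite /Lf big1 // => a _; rewrite mcoeff0. Qed.
Lemma LfD p q : Lf (p + q) = Lf p + Lf q.
Proof. by rewrite /Lf -big_split; apply: eq_bigr => a _; rewrite mcoeffD. Qed.
Lemma LfZ c p : Lf (c *: p) = c * Lf p.
Proof. by rewrite /Lf mulr_sumr; apply: eq_bigr => a _; rewrite mcoeffZ. Qed.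
Lemma LfN p : Lf (- p) = - Lf p.
Proof. by rewrite -scaleN1r LfZ mulN1r. Qed.
Lemma LfB p q : Lf (p - q) = Lf p - Lf q.
Proof. by rewrite LfD LfN. Qed.
Lemma Lf_sum (I : Type) (s : seq I) (P : pred I) (F : I -> {mpoly K[r]}) :
  Lf (\sum_(i <- s | P i) F i) = \sum_(i <- s | P i) Lf (F i).
Proof. exact: (big_morph Lf LfD Lf0). Qed.

Definition Nw (w : 'X_{1..r}) : K := \sum_a (sv a == w)%:R.

Lemma LfX w : Lf 'X_[w] = Nw w.
Proof. by apply: eq_bigr => a _; rewrite mcoeffX eq_sym. Qed.

Lemma Nw_deg w : mdeg w != d -> Nw w = 0.
Proof.
move=> h; rewrite /Nw big1 // => a _.
case: eqP => // e; by move: h; rewrite -e sv_deg eqxx.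
Qed.

Lemma Nw_sv a : Nw (sv a) = 1.
Proof.
rewrite /Nw (bigD1 a) //= eqxx big1 ?addr0 // => b nb.
by rewrite (inj_eq sv_inj) (negbTE nb).
Qed.

Lemma Nw_nsv w : (forall a, sv a != w) -> Nw w = 0.
Proof. by move=> h; rewrite /Nw big1 // => a _; rewrite (negbTE (h a)). Qed.

Lemma Lf_expand p z :
  Lf (p * 'X_[z]) = \sum_(m <- msupp p) p@_m * Nw (m + z).
Proof.
rewrite {1}[p]mpolyE mulr_suml Lf_sum; apply: eq_bigr => m _.
by rewrite -scalerAl LfZ -mpolyXD LfX.
Qed.

Definition Ipred : {pred {mpoly K[r]}} := fun p =>
  if excluded_middle_informative (forall q, Lf (p * q) = 0) then true else false.

Lemma memI p : p \in Ipred <-> forall q, Lf (p * q) = 0.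
Proof.
rewrite unfold_in /Ipred; case: excluded_middle_informative => h; split=> //.
Qed.

Lemma memI_X p : (forall z, Lf (p * 'X_[z]) = 0) -> p \in Ipred.
Proof.
move=> h; apply/memI => q; rewrite [q]mpolyE mulr_sumr Lf_sum big1 // => m _.
by rewrite -scalerAr LfZ h mulr0.
Qed.

Lemma Lf_degmis j p z : p \is j.-homog -> (mdeg z + j != d)%N ->
  Lf (p * 'X_[z]) = 0.
Proof.
move=> hp hz; rewrite Lf_expand big1 // => m _.
have [e|ne] := eqVneq (mdeg m) j.
  by rewrite Nw_deg ?mulr0 // mdegD e addnC.
by rewrite (dhomog_nemf_coeff hp ne) mul0r.
Qed.

Lemma Ipred_ideal : is_ideal Ipred.
Proof.
split.
- by apply/memI => q; rewrite mul0r Lf0.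
- move=> p q /memI hp /memI hq; apply/memI => q'.
  by rewrite mulrDl LfD hp hq addr0.
- move=> p q /memI hq; apply/memI => q'.
  by rewrite [p * q]mulrC -mulrA hq.
Qed.

Lemma Ipred_homog : is_homogeneous Ipred.
Proof.
move=> p k /memI hp; apply: memI_X => z.
have [e|ne] := eqVneq (mdeg z + k)%N d; last first.
  by apply: (Lf_degmis (pihomogP mdeg k p)).
have hX : forall m, Lf (p@_m *: 'X_[m] * 'X_[z]) = p@_m * Nw (m + z).
  by move=> m; rewrite -scalerAl LfZ -mpolyXD LfX.
rewrite pihomogE mulr_suml Lf_sum.
have H := hp 'X_[z]; rewrite (mpolyE p) mulr_suml Lf_sum (bigID (fun m => mdeg m == k)) /= in H.
rewrite [X in _ + X]big1 ?addr0 // in H.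
move=> m nm; rewrite hX Nw_deg ?mulr0 // mdegD -e addnC eqn_add2l //.
Qed.

Definition Pind j n := exists q : 'I_n -> {mpoly K[r]}, indep_mod Ipred j q.

Lemma Pind0 j : Pind j 0.
Proof. by exists (fun _ => 0); split => [[m hm]|c _ [m hm]]. Qed.

Lemma Pind_restrict j n m : (m <= n)%N -> Pind j n -> Pind j m.
Proof.
move=> mn [q [hq hc]]; exists (fun i : 'I_m => q (widen_ord mn i)); split=> // c hs i.
pose c' (l : 'I_n) : K := if (insub (val l) : option 'I_m) is Some i then c i else 0.
have e : \sum_(l < n) c' l *: q l = \sum_(i < m) c i *: q (widen_ord mn i).
  rewrite (bigID (fun l : 'I_n => (l < m)%N)) /= [X in _ + X]big1 ?addr0.
    rewrite (big_ord_narrow mn).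
    by apply: eq_bigr => l _; rewrite /c' /= valK.
  by move=> l hl; rewrite /c' insubF ?scale0r //; apply: negbTE.
have := hc c'; rewrite e => /(_ hs (widen_ord mn i)).
by rewrite /c' /= valK.
Qed.

Lemma LB_Pind (X : finType) j (m z : X -> 'X_{1..r}) (a0 : X -> SI) :
  (forall x, mdeg (m x) = j) -> (forall x, sv (a0 x) = (m x + z x)%MM) ->
  (forall x y a, sv a = (m x + z y)%MM -> x = y) ->
  forall n, #|X| = n -> Pind j n.
Proof.
move=> hm ha hH n <-.
exists (fun i => 'X_[m (enum_val i)]); split.
  by move=> i; rewrite dhomogX /= hm.
move=> c /memI hs i; have := hs 'X_[z (enum_val i)].
rewrite mulr_suml Lf_sum (bigD1 i) //= big1 ?addr0.
  by rewrite -scalerAl LfZ -mpolyXD LfX -ha Nw_sv mulr1.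
move=> l nl; rewrite -scalerAl LfZ -mpolyXD LfX Nw_nsv ?mulr0 //.
move=> a; apply/eqP => /hH /enum_val_inj e.
by rewrite e eqxx in nl.
Qed.

Lemma UB_Pind (W : finType) j (phi : W -> {mpoly K[r]} -> K) :
  (forall w c p q, phi w (c *: p + q) = c * phi w p + phi w q) ->
  (forall p, p \is j.-homog -> (forall w, phi w p = 0) -> p \in Ipred) ->
  forall n, (#|W| < n)%N -> ~ Pind j n.
Proof.
move=> lin ker n hn [q [hq hc]].
pose M : 'M[K]_(n, #|W|) := \matrix_(i, l) phi (enum_val l) (q i).
have hK : kermx M != 0.
  rewrite -mxrank_eq0 mxrank_ker subn_eq0 -ltnNge.
  exact: (leq_ltn_trans (rank_leq_col M) hn).
have [i0 hi0] : exists i0, row i0 (kermx M) != 0.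
  case: (pickP (fun i => row i (kermx M) != 0)) => [i0 hi0|h]; first by exists i0.
  move: hK; suff -> : kermx M = 0 by rewrite eqxx.
  by apply/row_matrixP => i; rewrite row0; apply/eqP; move: (h i) => /negbFE.
set v := row i0 (kermx M).
have hv : v *m M = 0 by rewrite /v -row_mul mulmx_ker row0.
have ph0 w : phi w 0 = 0.
  have := lin w 1 0 0; rewrite scaler0 addr0 mul1r.
  by move/(congr1 (fun y => y - phi w 0)); rewrite subrr addrK.
have phD w : {morph phi w : x y / x + y}.
  by move=> x y /=; rewrite -{1}[x]scale1r lin mul1r.
have phZ w c p : phi w (c *: p) = c * phi w p.
  by rewrite -[c *: p]addr0 lin ph0 addr0.
pose c : 'I_n -> K := fun j => v 0 j.
have hP : \sum_j c j *: q j \in Ipred.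
  apply: ker.
    by apply: rpred_sum => i _; apply: dhomogZ.
  move=> w; rewrite (big_morph (phi w) (phD w) (ph0 w)).
  have := congr1 (fun A : 'rV[K]_#|W| => A 0 (enum_rank w)) hv.
  rewrite !mxE => H; rewrite -[RHS]H; apply: eq_bigr => i _.
  rewrite phZ /c /v [row _ _ _ _]mxE; congr (_ * _); by rewrite /M mxE enum_rankK.
have := hc c hP => hz; move: hi0; rewrite -/v; suff -> : v = 0 by rewrite eqxx.
by apply/rowP => l; rewrite [RHS]mxE; exact: (hz l).
Qed.

Lemma hilb_exists j b : (forall n, (b < n)%N -> ~ Pind j n) ->
  exists h, hilb_fun_at Ipred j h.
Proof.
move=> hb.
suff main : forall k n0, (b - n0 <= k)%N -> Pind j n0 -> exists h, hilb_fun_at Ipred j h.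
  by apply: (main b 0%N); [rewrite subn0 | apply: Pind0].
elim=> [|k ih] n0 hk hP.
  exists n0; split=> // h1; apply: (hb n0.+1) => //.
  by rewrite ltnS -subn_eq0 -leqn0.
case: (classic (Pind j n0.+1)) => [h1|h1].
  by apply: (ih n0.+1) => //; lia.
by exists n0; split.
Qed.

Lemma hilb_ge j h a : hilb_fun_at Ipred j h -> Pind j a -> (a <= h)%N.
Proof.
move=> [_ hn] ha; rewrite leqNgt; apply/negP => lt.
by apply: hn; apply: (Pind_restrict lt ha).
Qed.

Lemma hilb_le j h b : hilb_fun_at Ipred j h ->
  (forall n, (b < n)%N -> ~ Pind j n) -> (h <= b)%N.
Proof.
move=> [hh _] hb; rewrite leqNgt; apply/negP => lt.
exact: (hb h lt hh).
Qed.

Lemma notP_all j n : (#|{: 'X_{1..r < d.+1}}| < n)%N -> ~ Pind j n.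
Proof.
apply: (@UB_Pind _ j (fun w p => Lf (p * 'X_[val w]))).
- by move=> w c p q; rewrite mulrDl LfD -scalerAl LfZ.
move=> p hp h; apply: memI_X => z.
have [lt|ge] := ltnP (mdeg z) d.+1.
  exact: (h (BMultinom lt)).
apply: (Lf_degmis hp); rewrite neq_ltn; apply/orP; right.
by apply: (leq_trans ge); rewrite leq_addr.
Qed.

Lemma hilb_all j : exists h, hilb_fun_at Ipred j h.
Proof. exact: (hilb_exists (@notP_all j)). Qed.

Section A0.
Variable a0 : SI.

Lemma one_notin : (1 : {mpoly K[r]}) \notin Ipred.
Proof.
apply/negP => /memI h; have := h 'X_[sv a0]; rewrite mul1r LfX Nw_sv.
by apply/eqP; exact: oner_neq0.
Qed.

Lemma Pind_d1 : Pind d 1.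
Proof.
exists (fun _ => 'X_[sv a0]); split.
  by move=> i; rewrite dhomogX /= sv_deg.
move=> c /memI hs i; have := hs 1; rewrite big_ord1 mulr1 LfZ LfX Nw_sv mulr1.
by rewrite (ord1 i).
Qed.

Lemma notP_big j n : (d < j)%N -> (0 < n)%N -> ~ Pind j n.
Proof.
move=> hj hn; apply: (@UB_Pind 'I_0 j (fun _ _ => 0)).
- by move=> *; rewrite mulr0 addr0.
- move=> p hp _; apply: memI_X => z; apply: (Lf_degmis hp).
  by rewrite neq_ltn; apply/orP; right; apply: (leq_trans hj); rewrite leq_addl.
- by rewrite card_ord.
Qed.

Lemma socle1 : socle_dim1 Ipred.
Proof.
exists 'X_[sv a0]; split.
- move=> i; apply: memI_X => z; rewrite -!mpolyXD LfX Nw_deg //.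
  rewrite !mdegD sv_deg mdeg1; lia.
- apply/negP => /memI h; have := h 1; rewrite mulr1 LfX Nw_sv.
  by apply/eqP; exact: oner_neq0.
move=> g hg; exists (Lf g); apply: memI_X => z.
rewrite mulrBl LfB -scalerAl LfZ -mpolyXD LfX.
case: (pickP (fun i => (0 < z i)%N)) => [i hi|h].
  have hU : (U_(i) <= z)%MM.
    by apply/mnm_lepP => l; rewrite mnm1E; case: eqP => // <-.
  rewrite -(submK hU) addmC mpolyXD mulrA.
  have /memI -> := hg i.
  rewrite Nw_deg ?mulr0 ?subrr //.
  rewrite mdegD sv_deg mdegD mdeg1 neq_ltn; apply/orP; right.
  by rewrite addnA ltn_addr // addn1.
have -> : z = 0%MM.
  by apply/mnmP => l; rewrite mnm0E; move: (h l) => /negbT; rewrite lt0n negbK => /eqP.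
by rewrite mpolyX0 mulr1 addm0 Nw_sv mulr1 subrr.
Qed.

End A0.

End Generic.

Lemma eq_inl (X Y : eqType) (a b : X) : (inl a == inl b :> X + Y) = (a == b).
Proof. by apply/eqP/eqP => [[]|->]. Qed.
Lemma eq_inr (X Y : eqType) (a b : Y) : (inr a == inr b :> X + Y) = (a == b).
Proof. by apply/eqP/eqP => [[]|->]. Qed.
Lemma eq_lr (X Y : eqType) (a : X) (b : Y) : (inl a == inr b :> X + Y) = false.
Proof. by []. Qed.
Lemma eq_rl (X Y : eqType) (a : X) (b : Y) : (inr b == inl a :> X + Y) = false.
Proof. by []. Qed.
Definition eqsE := (eq_inl, eq_inr, eq_lr, eq_rl).

Lemma exists_super (T : finType) (n : nat) (C : {set T}) :
  (#|C| <= n <= #|T|)%N -> exists A : {set T}, C \subset A /\ #|A| = n.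
Proof.
elim: n C => [|n ih] C /andP [h1 h2].
  exists C; split => //; apply/eqP; by rewrite -leqn0.
have [e|ne] := eqVneq #|C| n.+1; first by exists C.
have [|A [hA cA]] := ih C.
  by apply/andP; split; [rewrite -ltnS ltn_neqAle ne h1 | apply: ltnW].
have [x hx] : exists x, x \notin A.
  apply/existsP; rewrite -negb_forall; apply/negP => /forallP hall.
  have : A = setT by apply/setP => x; rewrite inE hall.
  by move=> eA; move: h2; rewrite -cA eA cardsT ltnn.
exists (x |: A); split; first by apply: (subset_trans hA); apply: subsetUr.
by rewrite cardsU1 hx cA.
Qed.

Section Constr.
Variables (d s t r : nat).
Hypothesis hd : (4 <= d)%N.
Hypothesis hs : (d <= s)%N.

Definition Aset := {A : {set 'I_s} | #|A| == d.-1}.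
Definition V := ('I_s + Aset + 'I_t)%type.
Hypothesis eV : #|{: V}| = r.

Definition var (v : V) : 'I_r := cast_ord eV (enum_rank v).
Definition unvar (i : 'I_r) : V := enum_val (cast_ord (esym eV) i).
Lemma varK : cancel var unvar.
Proof. by move=> v; rewrite /var /unvar cast_ordK enum_rankK. Qed.
Lemma unvarK : cancel unvar var.
Proof. by move=> i; rewrite /var /unvar enum_valK cast_ordKV. Qed.
Lemma var_inj : injective var. Proof. exact: can_inj varK. Qed.

Definition mk (g : V -> nat) : 'X_{1..r} := [multinom g (unvar i) | i < r].
Lemma mkE g v : mk g (var v) = g v.
Proof. by rewrite mnmE varK. Qed.

Lemma mnm_eqV (m m' : 'X_{1..r}) : (forall v, m (var v) = m' (var v)) -> m = m'.
Proof. by move=> h; apply/mnmP => i; rewrite -(unvarK i) h. Qed.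

Lemma sumV (F : V -> nat) : (\sum_v F v =
  \sum_i F (inl (inl i)) + \sum_A F (inl (inr A)) + \sum_t0 F (inr t0))%N.
Proof. by rewrite !big_sumType. Qed.

Lemma mdegV (m : 'X_{1..r}) : mdeg m = (\sum_v m (var v))%N.
Proof.
rewrite mdegE (reindex var) //; exists unvar => i _; [exact: varK | exact: unvarK].
Qed.

Lemma mdeg_mk g : mdeg (mk g) = (\sum_v g v)%N.
Proof. by rewrite mdegV; apply: eq_bigr => v _; rewrite mkE. Qed.

Definition xs (C : {set 'I_s}) (v : V) : nat :=
  if v is inl (inl i) then (i \in C : nat) else 0%N.
Definition ua (A : Aset) (v : V) : nat :=
  if v is inl (inr A') then (A' == A : nat) else 0%N.
Definition wk (t0 : 'I_t) (k : nat) (v : V) : nat :=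
  if v is inr t' then ((t' == t0) * k)%N else 0%N.

Lemma sum_xs C : (\sum_v xs C v)%N = #|C|.
Proof.
rewrite sumV [X in (_ + X)%N]big1 // [X in (_ + X + _)%N]big1 // !addn0.
rewrite -sum1_card [RHS]big_mkcond; apply: eq_bigr => i _; rewrite /xs; by case: (i \in C).
Qed.

Lemma sum_ua A : (\sum_v ua A v)%N = 1%N.
Proof.
rewrite sumV [X in (_ + X)%N]big1 // big1 // add0n addn0.
by rewrite (bigD1 A) //= eqxx big1 // => B /negbTE ->.
Qed.

Lemma sum_wk t0 k : (\sum_v wk t0 k v)%N = k.
Proof.
rewrite sumV big1 // [X in (_ + X + _)%N]big1 // !add0n.
by rewrite (bigD1 t0) //= eqxx mul1n big1 ?addn0 // => B /negbTE ->.
Qed.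

Definition SI := (Aset + 'I_t)%type.
Definition svf (a : SI) (v : V) : nat :=
  match a with inl A => (ua A v + xs (val A) v)%N | inr t0 => wk t0 d v end.
Definition sv (a : SI) := mk (svf a).

Lemma svE a v : sv a (var v) = svf a v. Proof. exact: mkE. Qed.

Lemma sv_deg a : mdeg (sv a) = d.
Proof.
rewrite mdeg_mk; case: a => [A|t0] /=; last exact: sum_wk.
rewrite big_split /= sum_ua sum_xs (eqP (valP A)); lia.
Qed.

Lemma svf_u a A : (0 < svf a (inl (inr A)))%N -> a = inl A.
Proof. by case: a => [B|t0] //=; rewrite addn0; case: eqP => // ->. Qed.

Lemma svf_w a t0 : (0 < svf a (inr t0))%N -> a = inr t0.
Proof. by case: a => [B|t1] //=; case: eqP => // ->. Qed.

Lemma svf_x a i : (0 < svf a (inl (inl i)))%N -> exists2 A, a = inl A & i \in val A.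
Proof. by case: a => [B|t1] //=; rewrite add0n lt0b => h; exists B. Qed.

Lemma sv_inj : injective sv.
Proof.
move=> a b e.
have ev v : svf a v = svf b v by rewrite -!svE e.
case: a e ev => [A|t0] _ ev.
  by apply: esym; apply: svf_u; rewrite -ev /= eqxx.
by apply: esym; apply: svf_w; rewrite -ev /= eqxx mul1n; lia.
Qed.

Variable A0 : Aset.
Definition Asup (C : {set 'I_s}) : Aset :=
  odflt A0 [pick A : Aset | C \subset val A].

Lemma Asup_sub (C : {set 'I_s}) : (#|C| <= d.-1)%N -> C \subset val (Asup C).
Proof.
move=> hC; rewrite /Asup; case: pickP => [A //|h].
have [|A [hA cA]] := @exists_super _ d.-1 C.
  by rewrite hC card_ord /=; apply: leq_trans hs; apply: leq_pred.
have hA' : #|A| == d.-1 by rewrite cA.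
by move: (h (exist _ A hA')) => /=; rewrite hA.
Qed.

Definition a01 (v : V) : SI :=
  match v with inl (inl i) => inl (Asup [set i]) | inl (inr A) => inl A | inr t0 => inr t0 end.
Definition m1 (v : V) : 'X_{1..r} := U_(var v)%MM.
Definition z1 (v : V) : 'X_{1..r} := mk (fun v' => svf (a01 v) v' - (v' == v))%N.

Lemma Asup1 i : i \in val (Asup [set i]).
Proof.
have := @Asup_sub [set i]; rewrite cards1 => /(_ _)/subsetP; apply; last by rewrite set11.
by rewrite -ltnS prednK //; apply: leq_trans hd.
Qed.

Lemma a01_pos v : (0 < svf (a01 v) v)%N.
Proof.
case: v => [[i|A]|t0] /=.
- by rewrite add0n Asup1.
- by rewrite eqxx.
- by rewrite eqxx mul1n; apply: leq_trans hd.
Qed.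

Lemma m1E v v' : m1 v (var v') = (v == v' : nat).
Proof. by rewrite /m1 mnm1E (inj_eq var_inj). Qed.

Lemma F1_sum v : sv (a01 v) = (m1 v + z1 v)%MM.
Proof.
apply: mnm_eqV => v'; rewrite svE mnmDE m1E mkE.
have := a01_pos v; case: (eqVneq v v') => [<-|ne] /=; first lia.
by rewrite add0n subn0.
Qed.

Lemma Anonempty (A : Aset) : exists j, j \in val A.
Proof.
have : (0 < #|val A|)%N by rewrite (eqP (valP A)); lia.
by rewrite card_gt0 => /set0Pn.
Qed.

Lemma F1_H x y a : sv a = (m1 x + z1 y)%MM -> x = y.
Proof.
move=> e.
have ev v' : svf a v' = ((x == v') + (svf (a01 y) v' - (v' == y)))%N.
  by rewrite -svE e mnmDE m1E mkE.
suff ea : a = a01 y.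
  have := ev x; rewrite ea eqxx; case: eqP => // _; rewrite subn0; lia.
clear e; case: y ev => [[i|A]|t0] ev.
- apply: (@svf_u _ (Asup [set i])); rewrite ev /= eqxx; lia.
- have [j hj] := Anonempty A.
  have := ev (inl (inl j)); rewrite /= hj add0n.
  have hp : (0 < svf a (inl (inl j)))%N by rewrite ev /= hj; lia.
  case: (svf_x hp) => B eaB hjB; rewrite eaB.
  have hu := ev (inl (inr B)); rewrite eaB /= !eqsE eqxx in hu.
  have ex : x = inl (inr B).
    by apply/eqP; move: hu; case: (x == inl (inr B)); case: (B == A); lia.
  suff -> : B = A by [].
  apply: val_inj; apply/setP => l; have := ev (inl (inl l)).
  rewrite eaB ex /= add0n subn0.
  by case: (l \in val B); case: (l \in val A).
- apply: (@svf_w _ t0); rewrite ev /= eqxx mul1n; lia.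
Qed.

Section F2.
Variable k : nat.
Hypothesis hk1 : (1 <= k)%N.
Hypothesis hkd : (k < d)%N.

Definition X2 := ({C : {set 'I_s} | #|C| == (d - k)%N} + 'I_t)%type.
Definition m2 (x : X2) : 'X_{1..r} := match x with
  | inl C => mk (fun v => ua (Asup (val C)) v + xs (val (Asup (val C)) :\: val C) v)%N
  | inr t0 => mk (wk t0 k) end.
Definition z2 (x : X2) : 'X_{1..r} := match x with
  | inl C => mk (xs (val C)) | inr t0 => mk (wk t0 (d - k)) end.
Definition a02 (x : X2) : SI := match x with
  | inl C => inl (Asup (val C)) | inr t0 => inr t0 end.

Lemma AsupC (C : {C : {set 'I_s} | #|C| == (d - k)%N}) :
  val C \subset val (Asup (val C)).
Proof. by apply: Asup_sub; rewrite (eqP (valP C)); lia. Qed.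

Lemma F2_deg x : mdeg (m2 x) = k.
Proof.
rewrite /m2; case: x => [C|t0]; rewrite mdeg_mk ?sum_wk //.
rewrite big_split /= sum_ua sum_xs cardsD (setIidPr (AsupC C)).
rewrite (eqP (valP C)) (eqP (valP (Asup (val C)))); lia.
Qed.

Lemma F2_sum x : sv (a02 x) = (m2 x + z2 x)%MM.
Proof.
apply: mnm_eqV => v; rewrite svE mnmDE.
case: x => [C|t0] /=; rewrite !mkE /=; last first.
  by case: v => [[i|A]|t1] //=; rewrite -mulnDr; congr (_ * _)%N; lia.
have hC := AsupC C.
case: v => [[i|A]|t1] //=; last by rewrite !addn0.
rewrite !add0n inE; case hi: (i \in val C).
  by rewrite (subsetP hC i hi).
by rewrite addn0.
Qed.

Lemma F2_H x y a : sv a = (m2 x + z2 y)%MM -> x = y.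
Proof.
move=> e.
have ev v : svf a v = (m2 x (var v) + z2 y (var v))%N by rewrite -svE e mnmDE.
clear e; case: x ev => [C|t0] ev.
  have ea : a = inl (Asup (val C)).
    by apply: svf_u; rewrite ev /= !mkE /= eqxx.
  case: y ev => [C'|t'] ev.
    congr inl; apply: val_inj; apply/setP => l.
    have := ev (inl (inl l)); rewrite ea /= !mkE /= inE add0n.
    case hl: (l \in val C); last by rewrite /=; case: (l \in val C'); case: (l \in _).
    by rewrite (subsetP (AsupC C) l hl) /=; case: (l \in val C').
  have := ev (inr t'); rewrite ea /= !mkE /= eqxx mul1n; lia.
have ea : a = inr t0.
  by apply: svf_w; rewrite ev /= !mkE /= eqxx mul1n; lia.
case: y ev => [C'|t'] ev.
  have : (0 < #|val C'|)%N by rewrite (eqP (valP C')); lia.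
  rewrite card_gt0 => /set0Pn [l hl].
  by have := ev (inl (inl l)); rewrite ea /= !mkE /= hl.
have := ev (inr t0); rewrite ea /= !mkE /= eqxx mul1n.
case: eqP => [->|_] //; lia.
Qed.

End F2.

Lemma sub_sA (g : V -> nat) (A : Aset) :
  (forall v, g v <= svf (inl A) v)%N -> g (inl (inr A)) = 0%N ->
  forall v, g v = xs [set i | (0 < g (inl (inl i)))%N] v.
Proof.
move=> hle hu v; have := hle v.
case: v => [[i|B]|t1] /=.
- by rewrite inE add0n; case: (i \in val A); case: (g _) => [|[]].
- by case: (eqVneq B A) => [->|_] //=; rewrite addn0; lia.
- by rewrite leqn0 => /eqP.
Qed.

Variable K : fieldType.
Local Notation LL := (Lf (K:=K) sv).
Local Notation II := (Ipred (K:=K) sv).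

Section F3.
Variable j : nat.
Hypothesis hj : (j <= d)%N.

Definition W3 := ({B : {set 'I_s} | #|B| == j} + {C : {set 'I_s} | #|C| == (d - j)%N}
   + 'I_t)%type.
Definition phi3 (w : W3) (p : {mpoly K[r]}) : K := match w with
 | inl (inl B) => p@_(mk (xs (val B)))
 | inl (inr C) => LL (p * 'X_[mk (xs (val C))])
 | inr t0 => p@_(mk (wk t0 j)) end.

Lemma phi3_lin w c p q : phi3 w (c *: p + q) = c * phi3 w p + phi3 w q.
Proof.
case: w => [[B|C]|t0] /=; rewrite ?mcoeffD ?mcoeffZ //.
by rewrite mulrDl LfD -scalerAl LfZ.
Qed.

Lemma phi3_ker p : p \is j.-homog -> (forall w, phi3 w p = 0) -> p \in II.
Proof.
move=> hp hphi; apply: memI_X => z.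
case: (classic (exists C : {set 'I_s}, z = mk (xs C))) => [[C ->]|hz].
  have [e|ne] := eqVneq #|C| (d - j)%N.
    have hC : #|C| == (d - j)%N by rewrite e.
    exact: (hphi (inl (inr (exist _ C hC)))).
  apply: (Lf_degmis sv_deg hp); rewrite mdeg_mk sum_xs.
  by move: ne => /eqP ne; apply/eqP => e; apply: ne; lia.
rewrite Lf_expand; apply: big1 => m _.
have [em|nm] := eqVneq (mdeg m) j; last by rewrite (dhomog_nemf_coeff hp nm) mul0r.
case: (classic (exists a, sv a = (m + z)%MM)) => [[a ea]|na]; last first.
  rewrite Nw_nsv ?mulr0 // => a; apply/eqP => ea; apply: na; by exists a.
have ev v : svf a v = (m (var v) + z (var v))%N by rewrite -svE ea mnmDE.
suff -> : p@_m = 0 by rewrite mul0r.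
clear ea; case: a ev => [A|t0] ev.
  case hzu: (z (var (inl (inr A)))) => [|n].
    exfalso; apply: hz; exists [set i | (0 < z (var (inl (inl i))))%N].
    apply: mnm_eqV => v; rewrite mkE.
    apply: (@sub_sA (fun v => z (var v)) A) => // v'.
    by rewrite ev leq_addl.
  have hmu : m (var (inl (inr A))) = 0%N.
    by have := ev (inl (inr A)); rewrite /= eqxx hzu; lia.
  have eB : m = mk (xs [set i | (0 < m (var (inl (inl i))))%N]).
    apply: mnm_eqV => v; rewrite mkE.
    apply: (@sub_sA (fun v => m (var v)) A) => // v'.
    by rewrite ev leq_addr.
  have hB : #|[set i | (0 < m (var (inl (inl i))))%N]| == j.
    by rewrite -em [in X in _ == X]eB mdeg_mk sum_xs.
  rewrite eB; exact: (hphi (inl (inl (exist (fun B : {set 'I_s} => #|B| == j) _ hB)) : W3)).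
have eW : m = mk (wk t0 (m (var (inr t0)))).
  apply: mnm_eqV => v; rewrite mkE.
  case: v => [[i|B]|t1] /=.
  - by have := ev (inl (inl i)); rewrite /=; lia.
  - by have := ev (inl (inr B)); rewrite /=; lia.
  case: (eqVneq t1 t0) => [->|ne]; first by rewrite mul1n.
  by have := ev (inr t1); rewrite /= (negbTE ne) mul0n; lia.
have hw : m (var (inr t0)) = j by rewrite -em [in RHS]eW mdeg_mk sum_wk.
by rewrite eW hw; exact: (hphi (inr t0)).
Qed.

End F3.

Lemma card_ksets k : #|{: {C : {set 'I_s} | #|C| == k}}| = 'C(s, k).
Proof. by rewrite card_sig -[in RHS](card_ord s) -card_draws cardsE. Qed.

Lemma card_X2 k : #|{: X2 k}| = ('C(s, d - k) + t)%N.
Proof. by rewrite card_sum card_ksets card_ord. Qed.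

Lemma card_W3 j : #|{: W3 j}| = ('C(s, j) + 'C(s, d - j) + t)%N.
Proof. by rewrite !card_sum !card_ksets card_ord. Qed.

Definition phi1 (v : V) (p : {mpoly K[r]}) : K := p@_(U_(var v)).

Lemma zero_in : (0 : {mpoly K[r]}) \in II.
Proof. by case: (Ipred_ideal K sv). Qed.

Lemma hilb1 : hilb_fun_at II 1 r.
Proof.
split.
  apply: (LB_Pind K sv_inj (m:=m1) (z:=z1) (a0:=a01)) => //.
  - by move=> v; rewrite mdeg1.
  - exact: F1_sum.
  - exact: F1_H.
apply: (@UB_Pind K r SI sv V 1 phi1); last by rewrite eV.
  by move=> v c p q; rewrite /phi1 mcoeffD mcoeffZ.
move=> p hp h.
suff -> : p = 0 by exact: zero_in.
apply/mpolyP => m; rewrite mcoeff0.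
have [e|ne] := eqVneq (mdeg m) 1%N; last exact: dhomog_nemf_coeff hp ne.
move/eqP: e => /mdeg1P [i /eqP ->]; rewrite -(unvarK i); exact: h.
Qed.

Hypothesis hcount : forall k, (1 <= k)%N -> (k < d./2)%N ->
  ('C(s, k.+1) + 'C(s, d - k.+1) < 'C(s, d - k))%N.

Lemma final : exists I : {pred {mpoly K[r]}},
  [/\ std_graded_AG I d, hilb_fun_at I 1 r &
      exists h : nat -> nat,
        (forall k, hilb_fun_at I k (h k)) /\
        (forall k, (1 <= k)%N -> (k < d./2)%N -> (h k.+1 < h k)%N)].
Proof.
exists II; split.
- split.
    split; [exact: Ipred_ideal | exact: (Ipred_homog sv_deg) | exact: (one_notin K sv_inj (inl A0))].
  split.
  + move=> H; have := hilb_ge H (Pind_d1 K sv_inj sv_deg (inl A0)); by [].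
  + split; first exact: Pind0.
    by apply: (notP_big sv_deg).
  + exact: (socle1 K sv_inj sv_deg (inl A0)).
- exact: hilb1.
pose h k := proj1_sig (constructive_indefinite_description _ (hilb_all K sv_deg k)).
have hh k : hilb_fun_at II k (h k) := proj2_sig (constructive_indefinite_description _ (hilb_all K sv_deg k)).
exists h; split => // k hk1 hk2.
have hkd : (k < d)%N by move: hk2 hd; clear; move=> *; lia.
have le1 : (h k.+1 <= #|{: W3 k.+1}|)%N.
  apply: (hilb_le (hh k.+1)) => n hn.
  apply: (UB_Pind (phi3_lin (j := k.+1))) => //; exact: phi3_ker.
have le2 : (#|{: X2 k}| <= h k)%N.
  apply: (hilb_ge (hh k)).
  apply: (LB_Pind K sv_inj (m:=m2 (k:=k)) (z:=z2 (k:=k)) (a0:=a02 (k:=k))) => //.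
  - exact: F2_deg.
  - exact: F2_sum.
  - exact: F2_H.
move: le1 le2; rewrite card_W3 card_X2 => le1 le2.
have := hcount hk1 hk2; lia.
Qed.

End Constr.

Unset Implicit Arguments.
Set Strict Implicit.

Theorem corollary2p4 (K : fieldType) (charK0 : [pchar K] =i pred0)
  (d : nat) (hd : (4 <= d)%N) :
  exists r0 : nat, (0 < r0)%N /\
    forall r : nat, (r0 <= r)%N ->
      exists I : {pred {mpoly K[r]}},
        [/\ std_graded_AG I d,
            hilb_fun_at I 1 r &
            exists h : nat -> nat,
              (forall k, hilb_fun_at I k (h k)) /\
              (forall k, (1 <= k)%N -> (k < d./2)%N -> (h k.+1 < h k)%N)].
Proof.
pose s := (4 * d)%N.
exists (s + 'C(s, d.-1)).+1; split => // r hr.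
pose t := (r - (s + 'C(s, d.-1)))%N.
have hs : (d <= s)%N by rewrite /s; lia.
have eV : #|{: V d s t}| = r.
  rewrite /V !card_sum !card_ord card_ksets /t; lia.
have [|A0s [_ cA]] := @exists_super 'I_s d.-1 set0.
  by rewrite cards0 card_ord /=; lia.
have hA : #|A0s| == d.-1 by rewrite cA.
pose A0 : Aset d s := exist _ A0s hA.
apply: (final hd hs eV A0 K).
move=> k hk1 hk2; exact: count_ineq.
Qed.
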